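(* Let $\alpha>0$, $\beta,\eta,\kappa\in\mathbb{R}$, $\rho>0$, $p\geq 1$, and $0\le a<x$. Let $f,g$ be two positive functions on $[0,\infty)$ with $f,g\in X^{p}_{c}(a,x)$ (for some $c\in\mathbb{R}$), such that ${}^{\rho}\mathcal{I}^{\alpha,\beta}_{a+,\eta,\kappa}f^{p}(x)<\infty$ and ${}^{\rho}\mathcal{I}^{\alpha,\beta}_{a+,\eta,\kappa}g^{p}(x)<\infty$. If there are real numbers $m,M>0$ with $0<m\leq \frac{f(t)}{g(t)}\leq M$ for all $t\in[a,x]$, then $$\left({}^{\rho}\mathcal{I}^{\alpha,\beta}_{a+,\eta,\kappa}f^{p}(x)\right)^{2/p}+\left({}^{\rho}\mathcal{I}^{\alpha,\beta}_{a+,\eta,\kappa}g^{p}(x)\right)^{2/p}\geq c_{2}\left({}^{\rho}\mathcal{I}^{\alpha,\beta}_{a+,\eta,\kappa}f^{p}(x)\right)^{1/p}\left({}^{\rho}\mathcal{I}^{\alpha,\beta}_{a+,\eta,\kappa}g^{p}(x)\right)^{1/p},$$ where $c_{2}=\frac{(M+1)(m+1)}{M}-2$.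
   Context: For $c\in\mathbb{R}$ and $1\le p<\infty$, $X^{p}_{c}(a,b)$ denotes the space of Lebesgue measurable functions $f$ on $(a,b)$ with $\left(\int_a^b |t^{c}f(t)|^{p}\,\frac{dt}{t}\right)^{1/p}<\infty$. For $\alpha>0$, $\beta,\eta,\kappa\in\mathbb{R}$, $\rho>0$, $0\le a<x$, and a function $\varphi$, the generalized (Katugampola) fractional integral is $${}^{\rho}\mathcal{I}^{\alpha,\beta}_{a+,\eta,\kappa}\varphi(x)=\frac{\rho^{1-\beta}x^{\kappa}}{\Gamma(\alpha)}\int_{a}^{x}\frac{\tau^{\rho(\eta+1)-1}}{(x^{\rho}-\tau^{\rho})^{1-\alpha}}\varphi(\tau)\,d\tau,$$ whenever the integral exists. Notation such as ${}^{\rho}\mathcal{I}^{\alpha,\beta}_{a+,\eta,\kappa}f^{p}(x)$ means the operator applied to the function $\tau\mapsto f(\tau)^p$, evaluated at $x$. *)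

(* Defs.v *)
From HB Require Import structures.
From mathcomp Require Import all_boot all_order all_algebra.
From mathcomp Require Import all_classical all_reals all_analysis.
Set Implicit Arguments. Unset Strict Implicit. Unset Printing Implicit Defensive.
Import Order.TTheory GRing.Theory Num.Theory.
Local Open Scope classical_set_scope.
Local Open Scope ring_scope.

Section Defs.
Variable R : realType.
Notation mu := (@lebesgue_measure R).

Definition Gamma (s : R) : R :=
  fine (\int[mu]_(t in `]0%R, +oo[%classic) ((t `^ (s - 1)) * expR (- t))%:E)%E.

Definition Xpc (c p a b : R) (f : R -> R) : Prop :=
  measurable_fun `]a, b[ f /\
  (\int[mu]_(t in `]a, b[) ((`| t `^ c * f t | `^ p) / t)%:E < +oo)%E.

Definition katI (rho alpha beta eta kappa a : R) (phi : R -> R) (x : R)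
  : \bar R :=
  ((rho `^ (1 - beta) * x `^ kappa / Gamma alpha)%:E *
   \int[mu]_(t in `]a, x[)
      ((t `^ (rho * (eta + 1) - 1) / (x `^ rho - t `^ rho) `^ (1 - alpha))
         * phi t)%:E)%E.
End Defs.

(* Main.v *)
Require Import Defs.
From HB Require Import structures.
From mathcomp Require Import all_boot all_order all_algebra.
From mathcomp Require Import all_classical all_reals all_analysis.
From mathcomp Require Import ring lra.
Import Order.TTheory GRing.Theory Num.Theory.
Local Open Scope classical_set_scope.
Local Open Scope ring_scope.

Lemma real_key (R : realType) (p m M U V : R) :
  1 <= p -> 0 < m -> m <= M -> 0 <= V -> m `^ p * V <= U -> U <= M `^ p * V ->
  ((M + 1) * (m + 1) / M - 2) * U `^ (1 / p) * V `^ (1 / p) <= U `^ (2 / p) + V `^ (2 / p).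
Proof.
move=> p1 m0 mM V0 lo hi.
have p0 : 0 < p by lra.
have M0 : 0 < M by lra.
have U0 : 0 <= U by apply: le_trans lo; apply: mulr_ge0 => //; exact: powR_ge0.
set F := U `^ (1 / p); set G := V `^ (1 / p).
have F0 : 0 <= F by exact: powR_ge0.
have G0 : 0 <= G by exact: powR_ge0.
have e2 : forall W, 0 <= W -> W `^ (2 / p) = (W `^ (1 / p)) ^+ 2.
  move=> W W0; rewrite -powR_mulrn ?powR_ge0 // -powRrM; congr (_ `^ _).
  by rewrite mulrC mul1r.
have e1 : forall k, 0 < k -> (k `^ p * V) `^ (1 / p) = k * G.
  move=> k k0; rewrite powRM ?powR_ge0 // -powRrM mul1r divff ?gt_eqF //.
  by rewrite powRr1 ?(ltW k0) // /G mul1r.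
have hF1 : m * G <= F.
  rewrite -e1 //; apply: ge0_ler_powR => //; rewrite ?nnegrE ?mulr_ge0 ?powR_ge0 //.
  by rewrite invr_ge0; apply: ltW.
have hF2 : F <= M * G.
  rewrite -e1 //; apply: ge0_ler_powR => //; rewrite ?nnegrE ?mulr_ge0 ?powR_ge0 //.
  by rewrite invr_ge0; apply: ltW.
rewrite !e2 // -/F -/G.
rewrite -subr_ge0.
have -> : F ^+ 2 + G ^+ 2 - ((M + 1) * (m + 1) / M - 2) * F * G =
  (M * (F - m * G) * F + (M * G - F) * G + (M - m) * F * G) / M.
  by field; rewrite gt_eqF.
apply: divr_ge0; last exact: ltW.
apply: addr_ge0; [apply: addr_ge0|].
- by apply: mulr_ge0; [apply: mulr_ge0; [exact: ltW|rewrite subr_ge0]|].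
- by apply: mulr_ge0 => //; rewrite subr_ge0.
- by apply: mulr_ge0 => //; apply: mulr_ge0 => //; rewrite subr_ge0.
Qed.

Theorem theorem9 (R : realType) (alpha beta eta kappa rho p a x c m M : R)
  (f g : R -> R) :
  (0 < alpha)%R -> (0 < rho)%R -> (1 <= p)%R -> (0 <= a)%R -> (a < x)%R ->
  (forall t, (0 <= t)%R -> (0 < f t)%R) -> (forall t, (0 <= t)%R -> (0 < g t)%R) ->
  Xpc c p a x f -> Xpc c p a x g ->
  (katI rho alpha beta eta kappa a (fun t => (f t `^ p)%R) x < +oo)%E ->
  (katI rho alpha beta eta kappa a (fun t => (g t `^ p)%R) x < +oo)%E ->
  (0 < m)%R -> (0 < M)%R ->
  (forall t, (a <= t <= x)%R -> (m <= f t / g t <= M)%R) ->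
  let IF := fine (katI rho alpha beta eta kappa a (fun t => (f t `^ p)%R) x) in
  let IG := fine (katI rho alpha beta eta kappa a (fun t => (g t `^ p)%R) x) in
  let c2 := (M + 1) * (m + 1) / M - 2 in
  (IF `^ (2 / p) + IG `^ (2 / p) >= c2 * IF `^ (1 / p) * IG `^ (1 / p))%R.
Proof.
move=> a0 r0 p1 a0' ax f0 g0 [mf _] [mg _] hIf hIg m0 M0 hmM; rewrite /=.
have mM : m <= M.
  have := hmM a; rewrite lexx ltW //= => /(_ isT) /andP[h1 h2]; lra.
set K := rho `^ (1 - beta) * x `^ kappa / Gamma alpha.
have K0 : 0 <= K.
  rewrite /K; apply: divr_ge0; first by apply: mulr_ge0; apply: powR_ge0.
  apply: fine_ge0; apply: integral_ge0 => t _; rewrite lee_fin.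
  by apply: mulr_ge0; [apply: powR_ge0|apply: ltW; apply: expR_gt0].
set w := fun t : R => t `^ (rho * (eta + 1) - 1) / (x `^ rho - t `^ rho) `^ (1 - alpha).
have w0 t : 0 <= w t by apply: divr_ge0; apply: powR_ge0.
have mD : measurable (`]a, x[ : set R) by exact: measurable_itv.
have mw : measurable_fun `]a, x[ w.
  have ew : forall t : R, t `^ (rho * (eta + 1) - 1) *
      ((x `^ rho - t `^ rho) `^ (1 - alpha)) `^ (-1) = w t.
    by move=> t; rewrite /w powR_inv1 //; exact: powR_ge0.
  apply: (eq_measurable_fun _ (fun t _ => ew t)).
  apply: measurable_realfun.measurable_funM.
    exact: (measurableT_comp (measurable_realfun.measurable_powR _) (@measurable_id _ _ _)).
  apply: (measurableT_comp (measurable_realfun.measurable_powR _)).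
  apply: (measurableT_comp (measurable_realfun.measurable_powR _)).
  apply: measurable_realfun.measurable_funB; first exact: measurable_cst.
  exact: (measurableT_comp (measurable_realfun.measurable_powR _) (@measurable_id _ _ _)).
have mfp : measurable_fun `]a, x[ (fun t => w t * f t `^ p).
  by apply: measurable_realfun.measurable_funM => //; exact: (measurableT_comp (measurable_realfun.measurable_powR p) mf).
have mgp : measurable_fun `]a, x[ (fun t => w t * g t `^ p).
  by apply: measurable_realfun.measurable_funM => //; exact: (measurableT_comp (measurable_realfun.measurable_powR p) mg).
set If := (\int[lebesgue_measure]_(t in `]a, x[) (w t * f t `^ p)%:E)%E.
set Ig := (\int[lebesgue_measure]_(t in `]a, x[) (w t * g t `^ p)%:E)%E.
have wf t : 0 <= w t * f t `^ p by apply: mulr_ge0 => //; exact: powR_ge0.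
have wg t : 0 <= w t * g t `^ p by apply: mulr_ge0 => //; exact: powR_ge0.
have If0 : (0 <= If)%E.
  by apply: integral_ge0 => t _; rewrite lee_fin mulr_ge0 ?powR_ge0.
have Ig0 : (0 <= Ig)%E.
  by apply: integral_ge0 => t _; rewrite lee_fin mulr_ge0 ?powR_ge0.
have pt t : a < t < x -> m `^ p * g t `^ p <= f t `^ p /\ f t `^ p <= M `^ p * g t `^ p.
  move=> /andP[hat htx].
  have t0 : 0 <= t by lra.
  have gt := g0 t t0; have ft := f0 t t0.
  have /andP[h1 h2] := hmM t ltac:(apply/andP; split; lra).
  rewrite ler_pdivlMr // in h1; rewrite ler_pdivrMr // in h2.
  have p0 : 0 <= p by lra.
  rewrite -!powRM; try lra.
  split; apply: ge0_ler_powR => //; rewrite nnegrE; try apply: mulr_ge0; lra.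
have lo : ((m `^ p)%:E * Ig <= If)%E.
  rewrite -(@ge0_integralZl_EFin _ _ _ lebesgue_measure _ mD (fun t => (w t * g t `^ p)%:E)); last by apply: powR_ge0.
  - apply: ge0_le_integral => //.
    + by move=> t _; rewrite -EFinM lee_fin mulr_ge0 ?powR_ge0 ?wg.
    + by apply/measurable_realfun.measurable_EFinP; apply: measurable_realfun.measurable_funM.
    + by apply/measurable_realfun.measurable_EFinP.
    + move=> t; rewrite /= in_itv /= => Dt; rewrite -EFinM lee_fin mulrCA ler_wpM2l //.
      by case: (pt t Dt).
  - by move=> t _; rewrite lee_fin.
  - by apply/measurable_realfun.measurable_EFinP.
have hi : (If <= (M `^ p)%:E * Ig)%E.
  rewrite -(@ge0_integralZl_EFin _ _ _ lebesgue_measure _ mD (fun t => (w t * g t `^ p)%:E)); last by apply: powR_ge0.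
  - apply: ge0_le_integral => //.
    + by move=> t _; rewrite lee_fin.
    + by apply/measurable_realfun.measurable_EFinP.
    + by apply/measurable_realfun.measurable_EFinP; apply: measurable_realfun.measurable_funM.
    + move=> t; rewrite /= in_itv /= => Dt; rewrite -EFinM lee_fin mulrCA ler_wpM2l //.
      by case: (pt t Dt).
  - by move=> t _; rewrite lee_fin.
  - by apply/measurable_realfun.measurable_EFinP.
move: hIf hIg; rewrite /katI -/K -/w -/If -/Ig => hIf hIg.
clearbody If Ig K.
case: (eqVneq K 0) => [->|Kn0].
  have hp : forall r, r != 0 -> r / p != 0.
    move=> r rn0; rewrite mulf_neq0 // invr_eq0 gt_eqF //; lra.
  have h1 : 1 / p != 0 by apply: hp; exact: oner_neq0.
  have h2 : 2 / p != 0 by apply: hp; rewrite pnatr_eq0.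
  have fz : fine (0 : \bar R) = 0 by [].
  rewrite !mul0e !fz (powR0 h1) (powR0 h2).
  by rewrite !mulr0 addr0.
have Kp : 0 < K by rewrite lt_def Kn0 K0.
move: If0 Ig0 hIf hIg lo hi.
case: If => [u| |] //; case: Ig => [v| |] //.
- move=> u0 v0 _ _ lo hi; rewrite -!EFinM /=.
  rewrite lee_fin in u0; rewrite lee_fin in v0.
  rewrite -EFinM lee_fin in lo; rewrite -EFinM lee_fin in hi.
  apply: real_key => //.
  + by apply: mulr_ge0 => //; apply: ltW.
  + by rewrite mulrCA ler_wpM2l //; apply: ltW.
  + by rewrite mulrCA ler_wpM2l //; apply: ltW.
- move=> _ _ _ _; rewrite gt0_muley ?lte_fin ?powR_gt0 // leye_eq //.
- by move=> _ _; rewrite gt0_muley ?lte_fin.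

Qed.
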